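(* The only pair of integers $(x,y)$ satisfying \[\frac{2x+y}{\sqrt{3y^2-4y+2}}=\frac{-x-2y}{\sqrt{3x^2-4x+2}}\] is $x=y=0$.
   Context: Square roots denote positive square roots (the radicands are positive for all integers $x,y$). *)

(* Defs.v *)
From Stdlib Require Import Reals ZArith.

(* Main.v *)
Require Import Defs.
From Stdlib Require Import Reals ZArith Lra Lia Psatz.
Open Scope R_scope.

Lemma zpart : forall x y : Z,
  (0 <= (2*x+y)*(-x-2*y))%Z ->
  ((2*x+y)*(2*x+y)*(3*x*x-4*x+2) = (-x-2*y)*(-x-2*y)*(3*y*y-4*y+2))%Z ->
  x = 0%Z /\ y = 0%Z.
Proof.
  intros x y H1 H2.
  assert (HA : (3*y*y-4*y+2 > 0)%Z).
  { assert (3*(3*y*y-4*y+2) = (3*y-2)*(3*y-2)+2)%Z by ring. pose proof (Z.square_nonneg (3*y-2)). lia. }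
  assert (HB : (3*x*x-4*x+2 > 0)%Z).
  { assert (3*(3*x*x-4*x+2) = (3*x-2)*(3*x-2)+2)%Z by ring. pose proof (Z.square_nonneg (3*x-2)). lia. }
  remember (2*x+y)%Z as a. remember (-x-2*y)%Z as b.
  remember (3*y*y-4*y+2)%Z as A. remember (3*x*x-4*x+2)%Z as B.
  destruct (Z.eq_dec (a*b) 0) as [E|E].
  - apply Z.mul_eq_0 in E. destruct E as [E|E].
    + rewrite E in H2. simpl in H2. symmetry in H2.
      apply Z.mul_eq_0 in H2. destruct H2 as [H2|H2]; [|lia].
      apply Z.mul_eq_0 in H2. lia.
    + rewrite E in H2. rewrite ?Z.mul_0_l in H2.
      apply Z.mul_eq_0 in H2. destruct H2 as [H2|H2]; [|lia].
      apply Z.mul_eq_0 in H2. lia.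
  - assert (Hp : (0 < a*b)%Z) by lia.
    assert (F : ((x-y)*(a*a*(3*(x+y)-4) + 3*(x+y)*A) = a*a*B - b*b*A)%Z)
      by (subst; ring).
    rewrite H2, Z.sub_diag in F.
    apply Z.mul_eq_0 in F. destruct F as [F|F].
    + assert (x = y) by lia. subst x.
      assert (a*b = -(9*(y*y)))%Z by (rewrite Heqa, Heqb; ring).
      pose proof (Z.square_nonneg y). lia.
    + assert (Ha : (a <> 0)%Z) by (intro Z0; rewrite Z0 in Hp; lia).
      assert (Ha2 : (0 < a*a)%Z).
      { destruct (Z_lt_le_dec 0 a). apply Z.mul_pos_pos; lia. apply Z.mul_neg_neg; lia. }
      destruct (Z_le_gt_dec (x+y) 0).
      * assert (a*a*(3*(x+y)-4) < 0)%Z by (apply Z.mul_pos_neg; lia).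
        assert (3*(x+y)*A <= 0)%Z by (apply Z.mul_nonpos_nonneg; lia).
        lia.
      * destruct (Z.eq_dec (x+y) 1) as [S|S].
        -- assert (y = 1 - x)%Z by lia. subst y.
           assert (2*((2*x-1)*(2*x-1)) = a*a*(3*(x+(1-x))-4) + 3*(x+(1-x))*A)%Z
             by (rewrite Heqa, HeqA; ring).
           assert (Hq : ((2*x-1)*(2*x-1) = 0)%Z) by lia.
           apply Z.mul_eq_0 in Hq. lia.
        -- assert (0 < a*a*(3*(x+y)-4))%Z by (apply Z.mul_pos_pos; lia).
           assert (0 < 3*(x+y)*A)%Z by (apply Z.mul_pos_pos; lia).
           lia.
Qed.

Theorem proposition8 : forall x y : Z,
  (2 * IZR x + IZR y) / sqrt (3 * IZR y ^ 2 - 4 * IZR y + 2)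
    = (- IZR x - 2 * IZR y) / sqrt (3 * IZR x ^ 2 - 4 * IZR x + 2)
  <-> (x = 0%Z /\ y = 0%Z).
Proof.
  intros x y; split.
  - intro H.
    set (X := IZR x) in *. set (Y := IZR y) in *.
    assert (HA : 0 < 3 * Y ^ 2 - 4 * Y + 2) by (pose proof (pow2_ge_0 (3*Y-2)); nra).
    assert (HB : 0 < 3 * X ^ 2 - 4 * X + 2) by (pose proof (pow2_ge_0 (3*X-2)); nra).
    pose proof (sqrt_lt_R0 _ HA) as sA. pose proof (sqrt_lt_R0 _ HB) as sB.
    pose proof (sqrt_sqrt _ (Rlt_le _ _ HA)) as qA.
    pose proof (sqrt_sqrt _ (Rlt_le _ _ HB)) as qB.
    set (SA := sqrt (3 * Y ^ 2 - 4 * Y + 2)) in *.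
    set (SB := sqrt (3 * X ^ 2 - 4 * X + 2)) in *.
    assert (E : (2*X+Y) * SB = (-X-2*Y) * SA).
    { apply (Rmult_eq_reg_r (/ (SA*SB))).
      2: { apply Rinv_neq_0_compat; nra. }
      unfold Rdiv in H. rewrite Rinv_mult.
      replace ((2*X+Y)*SB*(/SA * /SB)) with ((2*X+Y)*/SA*(SB*/SB)) by ring.
      replace ((-X-2*Y)*SA*(/SA * /SB)) with ((-X-2*Y)*/SB*(SA*/SA)) by ring.
      rewrite !Rinv_r by lra. rewrite H. ring. }
    assert (S1 : 0 <= (2*X+Y)*(-X-2*Y)).
    { assert (T: (2*X+Y)*(-X-2*Y)*SA = (2*X+Y)*(2*X+Y)*SB) by (rewrite Rmult_assoc, <- E; ring).
      assert (0 <= (2*X+Y)*(2*X+Y)*SB).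
      { apply Rmult_le_pos; [apply Rle_0_sqr | lra]. }
      destruct (Rle_lt_dec 0 ((2*X+Y)*(-X-2*Y))) as [h|h]; [exact h|].
      assert ((2*X+Y)*(-X-2*Y)*SA < 0) by (apply Rmult_neg_pos; lra). lra. }
    assert (S2 : (2*X+Y)*(2*X+Y)*(3*X*X-4*X+2) = (-X-2*Y)*(-X-2*Y)*(3*Y*Y-4*Y+2)).
    { replace (3*X*X-4*X+2) with (SB*SB) by (rewrite qB; ring).
      replace (3*Y*Y-4*Y+2) with (SA*SA) by (rewrite qA; ring).
      replace ((2*X+Y)*(2*X+Y)*(SB*SB)) with (((2*X+Y)*SB)*((2*X+Y)*SB)) by ring.
      rewrite E. ring. }
    apply zpart.
    + apply le_IZR. unfold X, Y in S1.
      repeat rewrite ?mult_IZR, ?plus_IZR, ?minus_IZR, ?opp_IZR. exact S1.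
    + apply eq_IZR. unfold X, Y in S2.
      repeat rewrite ?mult_IZR, ?plus_IZR, ?minus_IZR, ?opp_IZR. exact S2.
  - intros [-> ->]. simpl. unfold Rdiv.
    replace (2*0+0) with 0 by ring. replace (-0-2*0) with 0 by ring. ring.
Qed.
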